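(* Let $G$ be a graph on $n\ge 1$ vertices and let $s\ge 1$ be an integer. (1) For $x>\lambda(G)$ put $\beta_G(x)=\frac{s}{x}\chi_G(x)$. Then $\beta_G$ is strictly decreasing on $(\lambda(G),\infty)$, and $\lambda(\overline{K}_s\vee G)$ is the unique $x>\lambda(G)$ satisfying $\beta_G(x)=1$. (2) We have \[ \lambda(\overline{K}_s\vee G)\le \frac{\lambda(G)+\sqrt{\lambda(G)^2+4ns}}{2}, \] with equality if $G$ is regular.
   Context: $\lambda(\cdot)$ is the spectral radius of the adjacency matrix $A(\cdot)$. For $x>\lambda(G)$, the coronal of $G$ is $\chi_G(x)=\mathbf{1}^{\mathrm T}(xI-A(G))^{-1}\mathbf{1}$, the sum of all entries of $(xI-A(G))^{-1}$. $\overline{K}_s$ is the edgeless graph on $s$ vertices and $\vee$ denotes the join (disjoint union plus all edges between the two graphs). *)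

(* Defs.v *)
From HB Require Import structures.
From mathcomp Require Import all_boot all_order all_algebra.
From mathcomp Require Import classical_sets reals.
Set Implicit Arguments. Unset Strict Implicit. Unset Printing Implicit Defensive.
Import Order.TTheory GRing.Theory Num.Theory.
Local Open Scope ring_scope.
Local Open Scope classical_set_scope.

Definition simple_graph (n : nat) (e : rel 'I_n) : Prop :=
  symmetric e /\ irreflexive e.

Definition adjmx (R : realType) (n : nat) (e : rel 'I_n) : 'M[R]_n :=
  \matrix_(i, j) (e i j)%:R.

(* Spectral radius: max |mu| over the eigenvalues mu of A.  For a real
   symmetric matrix (such as an adjacency matrix) all eigenvalues are real,
   so we range over the real eigenvalues. *)
Definition specrad (R : realType) (n : nat) (A : 'M[R]_n) : R :=
  sup [set `|mu| | mu in [set mu : R | eigenvalue A mu]].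

(* Coronal chi_G(x) = 1^T (xI - A(G))^{-1} 1 (meaningful for x > lambda(G)). *)
Definition coronal (R : realType) (n : nat) (e : rel 'I_n) (x : R) : R :=
  \sum_(i < n) \sum_(j < n) (invmx (x%:M - adjmx R e)) i j.

(* Join  \bar K_s \vee G : vertices 'I_(s + n); the first s vertices form the
   edgeless graph \bar K_s, the last n form G, and every vertex of the first
   part is adjacent to every vertex of the second. *)
Definition join_empty (s n : nat) (e : rel 'I_n) : rel 'I_(s + n) :=
  fun u v =>
    match split u, split v with
    | inl _, inl _ => false
    | inl _, inr _ => true
    | inr _, inl _ => true
    | inr i, inr j => e i j
    end.

Definition regular (n : nat) (e : rel 'I_n) : Prop :=
  exists k : nat, forall i : 'I_n, #|[pred j | e i j]| = k.
Arguments coronal R {n} e x.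
Arguments adjmx R {n} e.
Arguments join_empty s {n} e.

(* Main.v *)
Require Import Defs.
From HB Require Import structures.
From mathcomp Require Import all_boot all_order all_algebra.
From mathcomp Require Import classical_sets reals.
From mathcomp Require Import sesquilinear spectral.
From mathcomp Require Import complex.
From mathcomp Require Import ring lra.
Import Order.TTheory GRing.Theory Num.Theory.
Local Open Scope ring_scope.
Set Implicit Arguments. Unset Strict Implicit.

Section Spec.
Variable R : realType.
Local Notation C := (R[i]).
Local Notation f := (real_complex R).
Local Open Scope sesquilinear_scope.

Lemma freal (r : R) : f r \is Num.real.
Proof.
rewrite realE; case: (lerP 0 r) => h; first by rewrite ler0c h.
by apply/orP; right; rewrite lecE /= eqxx ltW.
Qed.

Lemma conjf (r : R) : (f r)^* = f r.
Proof. exact: conj_Creal (freal r). Qed.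

Lemma finj : injective f.
Proof. exact: complexI. Qed.

Lemma mapq n (u v : 'rV[R]_n) (M : 'M[R]_n) :
  f ((u *m M *m v^T) 0 0) = (map_mx f u *m map_mx f M *m (map_mx f v)^t*) 0 0.
Proof.
have -> : (map_mx f v)^t* = map_mx f (v^T).
  by apply/matrixP => i j; rewrite !mxE conjf.
by rewrite -!map_mxM [RHS]mxE.
Qed.

Lemma diag_quad n (y : 'rV[C]_n) (E : 'rV[C]_n) :
  (y *m diag_mx E *m y^t*) 0 0 = \sum_k E 0 k * (y 0 k * (y 0 k)^*).
Proof.
rewrite mxE; apply: eq_bigr => k _; rewrite mul_mx_diag !mxE.
by rewrite -mulrA mulrCA.
Qed.


Lemma unit_diag_inv (K : numClosedFieldType) n (P : 'M[K]_n) (a b : 'rV_n) :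
  P *m P^t* = 1%:M -> P^t* *m P = 1%:M -> (forall k, a 0 k * b 0 k = 1) ->
  (P^t* *m diag_mx a *m P) *m (P^t* *m diag_mx b *m P) = 1%:M.
Proof.
move=> PPt PtP ab; rewrite !mulmxA -(mulmxA _ P) PPt mulmx1 -(mulmxA (P^t*)) mulmx_diag.
have -> : \row_j (a 0 j * b 0 j) = const_mx 1 by apply/rowP => j; rewrite !mxE ab.
by rewrite diag_const_mx mulmx1 PtP.
Qed.

Lemma spectral_real n (A : 'M[R]_n) : A^T = A ->
  exists d : 'I_n -> R, exists c : 'rV[R]_n -> 'I_n -> R,
  [/\ forall k, eigenvalue A (d k),
      forall u k, 0 <= c u k,
      forall u, \sum_k c u k = (u *m u^T) 0 0,
      forall u, (u *m A *m u^T) 0 0 = \sum_k d k * c u k &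
      forall x, (forall k, x != d k) -> (x%:M - A) \in unitmx /\
        forall u, (u *m invmx (x%:M - A) *m u^T) 0 0 = \sum_k c u k / (x - d k)].
Proof.
move=> symA.
set AC := map_mx f A.
have herm : AC \is hermsymmx.
  apply/is_hermitianmxP; rewrite expr0 scale1r; apply/matrixP => i j.
  by rewrite !mxE conjf -[in RHS]symA mxE.
have /orthomx_spectralP AE := hermitian_normalmx herm.
set P := spectralmx AC in AE. set D := spectral_diag AC in AE.
have Pu : P \is unitarymx := spectral_unitarymx AC.
have Pinv : invmx P = P^t* := invmx_unitary Pu.
have PPt : P *m P^t* = 1%:M by apply/unitarymxP.
have PtP : P^t* *m P = 1%:M by rewrite -Pinv mulVmx // spectral_unit.
rewrite Pinv in AE.
have Dreal := hermitian_spectral_diag_real herm.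
have Dr k : D 0 k \is Num.real by exact: (mxOverP Dreal).
pose d k := complex.Re (D 0 k).
have fd k : f (d k) = D 0 k := RRe_real (Dr k).
pose y (u : 'rV[R]_n) := map_mx f u *m P^t*.
pose c u k := complex.Re (y u 0 k * (y u 0 k)^*).
have fc u k : f (c u k) = y u 0 k * (y u 0 k)^*.
  by apply: RRe_real; rewrite -normCK realX ?normr_real.
have key u E : (map_mx f u *m (P^t* *m diag_mx E *m P) *m (map_mx f u)^t*) 0 0
    = \sum_k E 0 k * f (c u k).
  rewrite !mulmxA -[_ *m P *m _]mulmxA.
  have -> : P *m (map_mx f u)^t* = (y u)^t* by rewrite /y trmx_mul map_mxM trmxCK.
  rewrite diag_quad; apply: eq_bigr => k _; by rewrite fc.
exists d, c; split.
- move=> k; rewrite eigenvalue_root_char -(fmorph_root f) map_char_poly -/AC.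
  rewrite -eigenvalue_root_char.
  suff h : eigenvalue AC (D 0 k) by move: h; rewrite -(fd k).
  apply/eigenvalueP; exists (delta_mx 0 k *m P).
    have dD : delta_mx (0 : 'I_1) k *m diag_mx D = D 0 k *: delta_mx 0 k.
      apply/matrixP => i j; rewrite mul_mx_diag !mxE.
      case: (j =P k) => [->|/eqP njk]; first by rewrite mulrC.
      by rewrite andbF mul0r mulr0.
    by rewrite AE !mulmxA -(mulmxA _ P) PPt mulmx1 dD scalemxAl.
  apply/eqP => h; have := congr1 (fun M => M *m P^t*) h.
  rewrite -mulmxA PPt mulmx1 mul0mx => /matrixP/(_ 0 k).
  by rewrite !mxE !eqxx /= => /eqP; rewrite oner_eq0.
- move=> u k; have := fc u k; rewrite -normCK => h.
  by rewrite -ler0c h exprn_ge0 // normr_ge0.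
- move=> u; apply: finj; rewrite rmorph_sum.
  have -> : u *m u^T = u *m 1%:M *m u^T by rewrite mulmx1.
  have eq1 : 1%:M = P^t* *m diag_mx (const_mx 1) *m P by rewrite diag_const_mx mulmx1 PtP.
  rewrite mapq map_mx1 eq1 key; apply: eq_bigr => k _; by rewrite mxE mul1r.
- move=> u; apply: finj; rewrite mapq -/AC AE key rmorph_sum.
  by apply: eq_bigr => k _; rewrite rmorphM -fd.
move=> x hx.
pose b := \row_k (f x - D 0 k)^-1.
have Ex : map_mx f (x%:M - A) = P^t* *m diag_mx (\row_k (f x - D 0 k)) *m P.
  have -> : diag_mx (\row_k (f x - D 0 k)) = (f x)%:M - diag_mx D.
    apply/matrixP => i j; rewrite !mxE; case: eqP => [->|] /=.
      by rewrite !mulr1n.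
    by rewrite !mulr0n subr0.
  rewrite mulmxBr mulmxBl mul_mx_scalar -scalemxAl.
  set T := (X in _ *: X); have -> : T = 1%:M by exact: PtP.
  rewrite -AE scalemx1.
  by rewrite map_mxB /= map_scalar_mx.
have Nx : map_mx f (x%:M - A) *m (P^t* *m diag_mx b *m P) = 1%:M.
  rewrite Ex; apply: unit_diag_inv => // k.
  rewrite !mxE mulfV // subr_eq0; apply/eqP => h.
  by move: (hx k); rewrite -(fd k) in h; move/finj: h => ->; rewrite eqxx.
have [Ux _] := mulmx1_unit Nx.
have Uxr : (x%:M - A) \in unitmx by rewrite -(map_unitmx f).
have Ix : invmx (map_mx f (x%:M - A)) = P^t* *m diag_mx b *m P.
  have := congr1 (mulmx (invmx (map_mx f (x%:M - A)))) Nx.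
  by rewrite mulmxA mulVmx // mul1mx mulmx1 => <-.
split => // u; apply: finj; rewrite mapq map_invmx Ix key rmorph_sum.
apply: eq_bigr => k _.
by rewrite mxE fmorph_div rmorphB -fd mulrC.
Qed.
End Spec.

Section G.
Variable R : realType.
Local Notation ones n := (const_mx 1 : 'rV[R]_n).

Lemma join_block s n (e : rel 'I_n) :
  adjmx R (join_empty s e) = block_mx 0 (const_mx 1) (const_mx 1) (adjmx R e).
Proof.
apply/matrixP => i j; rewrite mxE /join_empty.
case: split_ordP => i' ->; case: split_ordP => j' ->.
- by rewrite block_mxEul mxE.
- by rewrite block_mxEur mxE.
- by rewrite block_mxEdl mxE.
- by rewrite block_mxEdr mxE.
Qed.

Lemma adj_sym n (e : rel 'I_n) : symmetric e -> (adjmx R e)^T = adjmx R e.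
Proof. by move=> se; apply/matrixP => i j; rewrite !mxE se. Qed.

Lemma join_sym s n (e : rel 'I_n) : symmetric e -> symmetric (join_empty s e).
Proof.
move=> se u v; rewrite /join_empty.
by case: (split u) => a; case: (split v) => b.
Qed.

Lemma adj_ge0 n (e : rel 'I_n) i j : 0 <= adjmx R e i j.
Proof. by rewrite mxE ler0n. Qed.

Lemma sum_quad n (u : 'rV[R]_n) (N : 'M_n) :
  (u *m N *m u^T) 0 0 = \sum_i \sum_j u 0 i * N i j * u 0 j.
Proof.
rewrite mxE exchange_big /=; apply: eq_bigr => i _.
rewrite mxE big_distrl /=; apply: eq_bigr => j _; by rewrite !mxE.
Qed.

Lemma coronalE n (e : rel 'I_n) x :
  coronal R e x = (ones n *m invmx (x%:M - adjmx R e) *m (ones n)^T) 0 0.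
Proof.
rewrite sum_quad /coronal; apply: eq_bigr => i _; apply: eq_bigr => j _.
by rewrite !mxE mul1r mulr1.
Qed.

End G.

Section G2.
Variable R : realType.
Local Notation ones n := (const_mx 1 : 'rV[R]_n).

Lemma eig_in m (M : 'M[R]_m) (d : 'I_m -> R) :
  (forall x, (forall k, x != d k) -> (x%:M - M) \in unitmx) ->
  forall mu, eigenvalue M mu -> exists k, mu = d k.
Proof.
move=> hu mu /eigenvalueP [v vM vn0].
case: (boolP [exists k, mu == d k]) => [/existsP [k /eqP ->]|/existsPn H].
  by exists k.
have U := hu mu H.
have h : v *m (mu%:M - M) = 0 by rewrite mulmxBr mul_mx_scalar vM subrr.
move/negP: vn0; case; apply/eqP.
by rewrite -[v]mulmx1 -(mulmxV U) mulmxA h mul0mx.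
Qed.

Local Open Scope classical_set_scope.
Lemma specrad_spec m (M : 'M[R]_m) (d : 'I_m -> R) (i0 : 'I_m) :
  (forall k, eigenvalue M (d k)) -> (forall mu, eigenvalue M mu -> exists k, mu = d k) ->
  exists k1, specrad M = `|d k1| /\ forall k, `|d k| <= `|d k1|.
Proof.
move=> he hin.
case: (@arg_maxP _ _ 'I_m i0 xpredT (fun k => `|d k|) isT) => k1 _ hmax.
exists k1.
have ub : ubound [set `|mu| | mu in [set mu | eigenvalue M mu]] `|d k1|.
  by move=> _ [mu /hin [k ->] <-]; apply: hmax.
have inS : [set `|mu| | mu in [set mu | eigenvalue M mu]] `|d k1| by exists (d k1); [exact: he|].
split; last by move=> k; apply: hmax.
apply/eqP; rewrite eq_le; apply/andP; split.
  by apply: ge_sup => //; exists `|d k1|.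
by apply: sup_upper_bound => //; split; [exists `|d k1| | exists `|d k1|].
Qed.
Local Close Scope classical_set_scope.

Lemma pos_idx (I : finType) (F : I -> R) :
  (forall i, 0 <= F i) -> 0 < \sum_i F i -> exists i, 0 < F i.
Proof.
move=> h0 hs; case: (boolP [exists i, 0 < F i]) => [/existsP [i hi]|/existsPn H].
  by exists i.
have : \sum_i F i <= 0.
  by apply: sumr_le0 => i _; move: (H i); rewrite -leNgt.
by rewrite leNgt hs.
Qed.

Lemma sum_lt1 (I : finType) (F G : I -> R) k :
  (forall i, F i <= G i) -> F k < G k -> \sum_i F i < \sum_i G i.
Proof.
move=> hle hlt; rewrite (bigD1 k) //= [X in _ < X](bigD1 k) //=.
by apply: ltr_leD => //; apply: ler_sum.
Qed.

Lemma term_mono (a d x y : R) : 0 <= a -> d < x -> 0 < x -> x < y ->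
  a / (y * (y - d)) <= a / (x * (x - d)) /\ (0 < a -> a / (y * (y - d)) < a / (x * (x - d))).
Proof.
move=> a0 dx x0 xy.
have p1 : 0 < x * (x - d) by apply: mulr_gt0; lra.
have p2 : 0 < y * (y - d) by apply: mulr_gt0; lra.
have lt12 : x * (x - d) < y * (y - d) by nra.
have iv : (y * (y - d))^-1 < (x * (x - d))^-1 by rewrite ltf_pV2 ?posrE.
split; first by apply: ler_wpM2l => //; apply: ltW.
by move=> a_pos; rewrite ltr_pM2l.
Qed.

End G2.

Section G3.
Variable R : realType.
Local Notation ones n := (const_mx 1 : 'rV[R]_n).

Lemma abs_quad m (M : 'M[R]_m) (v : 'rV_m) mu :
  (forall i j, 0 <= M i j) -> v *m M = mu *: v ->
  (map_mx Num.norm v *m (map_mx Num.norm v)^T) 0 0 = (v *m v^T) 0 0 /\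
  `|mu| * (v *m v^T) 0 0 <= (map_mx Num.norm v *m M *m (map_mx Num.norm v)^T) 0 0.
Proof.
move=> M0 vM.
have ww : (map_mx Num.norm v *m (map_mx Num.norm v)^T) 0 0 = (v *m v^T) 0 0.
  rewrite !mxE; apply: eq_bigr => j _; rewrite !mxE -normrM ger0_norm //.
  by rewrite -expr2 sqr_ge0.
split => //.
have q : (v *m M *m v^T) 0 0 = mu * (v *m v^T) 0 0 by rewrite vM -scalemxAl mxE.
have vv0 : 0 <= (v *m v^T) 0 0.
  by rewrite mxE sumr_ge0 // => j _; rewrite !mxE -expr2 sqr_ge0.
rewrite -(ger0_norm vv0) -normrM -q !sum_quad.
apply: le_trans (ler_norm_sum _ _ _) _; apply: ler_sum => i _.
apply: le_trans (ler_norm_sum _ _ _) _; apply: ler_sum => j _.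
by rewrite !normrM (ger0_norm (M0 i j)) !mxE.
Qed.

Lemma rayleigh_ub m (M : 'M[R]_m) (d : 'I_m -> R) (c : 'rV[R]_m -> 'I_m -> R) L :
  (forall u k, 0 <= c u k) -> (forall u, \sum_k c u k = (u *m u^T) 0 0) ->
  (forall u, (u *m M *m u^T) 0 0 = \sum_k d k * c u k) -> (forall k, d k <= L) ->
  forall u : 'rV[R]_m, (u *m M *m u^T) 0 0 <= L * (u *m u^T) 0 0.
Proof.
move=> c0 cs cq dL u; rewrite cq -cs mulr_sumr; apply: ler_sum => k _.
by apply: ler_wpM2r.
Qed.

Lemma const_quad a b (u : 'rV[R]_a) (v : 'rV[R]_b) :
  (u *m const_mx 1 *m v^T) 0 0 = (\sum_i u 0 i) * (\sum_j v 0 j).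
Proof.
rewrite mxE mulr_sumr; apply: eq_bigr => j _; rewrite !mxE; congr (_ * _).
by apply: eq_bigr => i _; rewrite mxE mulr1.
Qed.

Lemma join_quad s n (e : rel 'I_n) (a : 'rV[R]_s) (q : 'rV[R]_n) :
  (row_mx a q *m adjmx R (join_empty s e) *m (row_mx a q)^T) 0 0
     = 2 * ((\sum_i a 0 i) * (\sum_j q 0 j)) + (q *m adjmx R e *m q^T) 0 0
  /\ (row_mx a q *m (row_mx a q)^T) 0 0 = (a *m a^T) 0 0 + (q *m q^T) 0 0.
Proof.
rewrite join_block tr_row_mx mul_row_block !mulmx0 !add0r !mul_row_col mulmxDl.
split; last by rewrite mxE.
have E (X Y : 'M[R]_1) : (X + Y) 0 0 = X 0 0 + Y 0 0 by rewrite mxE.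
rewrite !E !const_quad.
ring.
Qed.

Lemma join_eig s n (e : rel 'I_n) (a : 'rV[R]_s) (w : 'rV[R]_n) th :
  row_mx a w *m adjmx R (join_empty s e) = th *: row_mx a w ->
  (forall i, th * a 0 i = \sum_j w 0 j) /\
  w *m (th%:M - adjmx R e) = (\sum_i a 0 i) *: ones n.
Proof.
rewrite join_block mul_row_block !mulmx0 !add0r scale_row_mx => /eq_row_mx [h1 h2].
split.
  move=> i; have := congr1 (fun M : 'rV[R]_s => M 0 i) h1; rewrite !mxE => <-.
  by apply: eq_bigr => j _; rewrite mxE mulr1.
rewrite mulmxBr mul_mx_scalar -h2 addrK; apply/rowP => j; rewrite !mxE mulr1.
by apply: eq_bigr => i _; rewrite mxE mulr1.
Qed.

End G3.

Section G4.
Variable R : realType.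
Local Notation ones n := (const_mx 1 : 'rV[R]_n).

Lemma ones_quad n : (ones n *m (ones n)^T) 0 0 = n%:R.
Proof.
rewrite mxE (eq_bigr (fun _ => 1)) ?sumr_const ?card_ord // => j _.
by rewrite !mxE mulr1.
Qed.

Lemma reg_colsum n (e : rel 'I_n) k : symmetric e ->
  (forall i : 'I_n, #|[pred j | e i j]| = k) ->
  forall j, \sum_i adjmx R e i j = k%:R.
Proof.
move=> se hk j; rewrite -(hk j) -sum1_card natr_sum [RHS]big_mkcond /=.
by apply: eq_bigr => i _; rewrite mxE se inE; case: (e j i).
Qed.

Lemma reg_le m (M : 'M[R]_m) (p : 'rV_m) mu K :
  (forall i j, 0 <= M i j) -> (forall j, \sum_i M i j = K) ->
  p *m M = mu *: p -> p != 0 -> `|mu| <= K.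
Proof.
move=> M0 cs pM pn0.
have [i0 _] : exists i : 'I_m, True.
  case: m M p pM pn0 {cs M0} => [|m] M p _ pn0; last by exists ord0.
  by move: pn0; rewrite (thinmx0 p) eqxx.
case: (@arg_maxP _ _ 'I_m i0 xpredT (fun j => `|p 0 j|) isT) => j _ hmax.
have pj : 0 < `|p 0 j|.
  rewrite normr_gt0; apply: contra pn0 => /eqP pj0; apply/eqP/rowP => i.
  by rewrite mxE; apply/eqP; rewrite -normr_eq0 eq_le normr_ge0 andbT -(normr0 R) -pj0; exact: hmax.
have h : `|mu| * `|p 0 j| <= K * `|p 0 j|.
  rewrite -normrM; have := congr1 (fun M : 'rV[R]_m => M 0 j) pM; rewrite !mxE => <-.
  rewrite -(cs j) mulr_suml.
  apply: le_trans (ler_norm_sum _ _ _) _; apply: ler_sum => i _.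
  by rewrite normrM (ger0_norm (M0 i j)) mulrC ler_wpM2l //; exact: hmax.
by rewrite -(ler_pM2r pj).
Qed.

Lemma row_nz m (v : 'rV[R]_m) : v != 0 -> exists j, v 0 j != 0.
Proof.
move=> vn0; case: (boolP [exists j, v 0 j != 0]) => [/existsP [j hj]|/existsPn H].
  by exists j.
move/negP: vn0; case; apply/eqP/rowP => j; rewrite mxE; move: (H j).
by rewrite negbK => /eqP.
Qed.

Lemma sum_ge_term (I : finType) (F : I -> R) k :
  (forall i, 0 <= F i) -> F k <= \sum_i F i.
Proof.
move=> h; rewrite (bigD1 k) //= lerDl; exact: sumr_ge0.
Qed.

Lemma vv_pos m (v : 'rV[R]_m) : v != 0 -> 0 < (v *m v^T) 0 0.
Proof.
move=> /row_nz [j hj]; rewrite mxE.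
have F0 i : 0 <= v 0 i * v^T i 0 by rewrite mxE -expr2 sqr_ge0.
apply: lt_le_trans (sum_ge_term j F0).
by rewrite mxE -expr2 lt_def sqrf_eq0 hj sqr_ge0.
Qed.

Lemma sum_ones m (u : 'rV[R]_m) : \sum_j u 0 j = (u *m (ones m)^T) 0 0.
Proof. by rewrite mxE; apply: eq_bigr => j _; rewrite !mxE mulr1. Qed.

End G4.

Unset Implicit Arguments. Set Strict Implicit.

Lemma contra_aux (R : realType) (lam lamJ X Y S t sig : R) : 0 <= lam -> 0 < t ->
  0 < S * t ^ 2 -> t * (lam + 1) = sig -> 2 * (S * t * sig) + X <= lamJ * (S * t ^ 2 + Y) ->
  lam * Y <= X -> lamJ * (S * t ^ 2 + Y) <= lam * (S * t ^ 2 + Y) -> False.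
Proof.
move=> l0 t0 st0 ht h1 h2 h3.
have e1 : 2 * (S * t * sig) = 2 * (S * t ^ 2) * (lam + 1) by rewrite -ht; ring.
nra.
Qed.

Lemma bound_aux (R : realType) (lam lJ N : R) : 0 <= lam -> lam < lJ -> 0 <= N ->
  lJ * (lJ - lam) <= N -> lJ <= (lam + Num.sqrt (lam ^+ 2 + 4%:R * N)) / 2%:R.
Proof.
move=> l0 llJ N0 h.
have r0 := sqrtr_ge0 (lam ^+ 2 + 4%:R * N).
have rr : Num.sqrt (lam ^+ 2 + 4%:R * N) ^+ 2 = lam ^+ 2 + 4%:R * N.
  by rewrite sqr_sqrtr // addr_ge0 ?sqr_ge0 // mulr_ge0.
move: r0 rr; set r := Num.sqrt _ => r0 rr.
rewrite ler_pdivlMr //; nra.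
Qed.

Lemma eq_aux (R : realType) (lam lJ N : R) : 0 <= lam -> lam < lJ ->
  lJ * (lJ - lam) = N -> lJ = (lam + Num.sqrt (lam ^+ 2 + 4%:R * N)) / 2%:R.
Proof.
move=> l0 llJ h.
have -> : lam ^+ 2 + 4%:R * N = (2%:R * lJ - lam) ^+ 2 by rewrite -h; ring.
rewrite sqrtr_sqr ger0_norm; last by lra.
by field.
Qed.

Theorem lemma3p2 (R : realType) (n s : nat) (e : rel 'I_n)
  (hG : simple_graph e) (hn : (1 <= n)%N) (hs : (1 <= s)%N) :
  let lam := specrad (adjmx R e) in
  let lamJ := specrad (adjmx R (join_empty s e)) in
  let beta := fun x : R => s%:R / x * coronal R e x in
  (* (1) beta strictly decreasing on (lam, oo) *)
  (forall x y : R, lam < x -> x < y -> beta y < beta x) /\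
  (* (1) lamJ is the unique x > lam with beta x = 1 *)
  (lam < lamJ /\ beta lamJ = 1 /\
   (forall x : R, lam < x -> beta x = 1 -> x = lamJ)) /\
  (* (2) upper bound, with equality for regular G *)
  lamJ <= (lam + Num.sqrt (lam ^+ 2 + 4%:R * n%:R * s%:R)) / 2%:R /\
  (regular e ->
     lamJ = (lam + Num.sqrt (lam ^+ 2 + 4%:R * n%:R * s%:R)) / 2%:R).
Proof.
move=> lam lamJ beta.
have [se ie] := hG.
have symA : (adjmx R e)^T = adjmx R e := adj_sym R se.
have symB : (adjmx R (join_empty s e))^T = adjmx R (join_empty s e).
  exact (adj_sym R (@join_sym s _ _ se)).
have [d [c [dE c0 cs cq ci]]] := spectral_real symA.
have [dB [cB [dBE cB0 cBs cBq cBi]]] := spectral_real symB.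
have i0 : 'I_n := Ordinal hn.
have j0 : 'I_(s + n) := Ordinal (leq_trans hn (leq_addl s n)).
have [k0 [lamE lamM]] := specrad_spec i0 dE (eig_in (fun x hx => (ci x hx).1)).
have [k1 [lamJE lamJM]] := specrad_spec j0 dBE (eig_in (fun x hx => (cBi x hx).1)).
have lamE' : lam = `|d k0| := lamE.
have lamJE' : lamJ = `|dB k1| := lamJE.
have lam0 : 0 <= lam by rewrite lamE' normr_ge0.
have dle k : d k <= lam by rewrite lamE'; apply: le_trans (real_ler_norm _) (lamM k); exact: num_real.
have dlt x k : lam < x -> d k < x by move=> h; apply: le_lt_trans (dle k) h.
have dneq x : lam < x -> forall k, x != d k by move=> h k; rewrite gt_eqF // dlt.
have chiE x : lam < x -> coronal R e x = \sum_k c (const_mx 1) k / (x - d k).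
  by move=> h; rewrite coronalE; exact: (ci x (dneq x h)).2.
have csn : \sum_k c (const_mx 1) k = n%:R by rewrite cs ones_quad.
have betaE x : lam < x -> beta x = \sum_k s%:R * c (const_mx 1) k / (x * (x - d k)).
  move=> h; rewrite /beta chiE // mulr_sumr; apply: eq_bigr => k _.
  by rewrite mulf_div.
have [kp kpos] : exists k, 0 < c (const_mx 1) k.
  by apply: pos_idx; [move=> k; exact: c0 | rewrite csn ltr0n].
have s0 : 0 < s%:R :> R by rewrite ltr0n.
have decr x y : lam < x -> x < y -> beta y < beta x.
  move=> lx xy; have ly : lam < y by apply: lt_trans xy.
  have x0 : 0 < x by apply: le_lt_trans lx.
  rewrite !betaE //; apply: (@sum_lt1 _ _ _ _ kp) => [k|].
    exact: (term_mono (mulr_ge0 (ltW s0) (c0 _ k)) (dlt x k lx) x0 xy).1.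
  exact: (term_mono (mulr_ge0 (ltW s0) (c0 _ kp)) (dlt x kp lx) x0 xy).2 (mulr_gt0 s0 kpos).
have B0 : forall i j, 0 <= adjmx R (join_empty s e) i j by move=> i j; exact: adj_ge0.
have A0 : forall i j, 0 <= adjmx R e i j by move=> i j; exact: adj_ge0.
have [k2 dBk2] : exists k2, dB k2 = lamJ.
  have /eigenvalueP [v vB vn0] := dBE k1.
  have [ww hv] := abs_quad B0 vB.
  set w := map_mx Num.norm v in ww hv.
  have vv0 := vv_pos vn0.
  have hterm k : 0 <= (`|dB k1| - dB k) * cB w k.
    apply: mulr_ge0 (cB0 _ _); rewrite subr_ge0.
    by apply: le_trans (real_ler_norm _) (lamJM k); exact: num_real.
  have hsum : \sum_k (`|dB k1| - dB k) * cB w k = 0.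
    apply/eqP; rewrite eq_le sumr_ge0 ?andbT; last by move=> k _; exact: hterm.
    have -> : \sum_k (`|dB k1| - dB k) * cB w k
        = `|dB k1| * \sum_k cB w k - \sum_k dB k * cB w k.
      rewrite mulr_sumr -sumrB; apply: eq_bigr => k _; ring.
    by rewrite cBs -cBq ww subr_le0.
  have cBpos : 0 < \sum_k cB w k by rewrite cBs ww.
  have [k2 pos2] := pos_idx (cB0 w) cBpos.
  exists k2.
  have := @psumr_eq0P _ _ _ _ (fun k _ => hterm k) hsum k2 isT.
  move/eqP; rewrite mulf_eq0 (gt_eqF pos2) orbF subr_eq0 => /eqP <-.
  by rewrite lamJE'.
have eigJ : eigenvalue (adjmx R (join_empty s e)) lamJ by rewrite -dBk2.
have dBle k : dB k <= lamJ.
  by rewrite lamJE'; apply: le_trans (real_ler_norm _) (lamJM k); exact: num_real.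
have rayB := rayleigh_ub cB0 cBs cBq dBle.
have hlt : lam < lamJ.
  have /eigenvalueP [p pA pn0] := dE k0.
  have [qq hq] := abs_quad A0 pA.
  set q := map_mx Num.norm p in qq hq.
  have pp0 := vv_pos pn0.
  have [j hj] := row_nz pn0.
  have q0 i : 0 <= q 0 i by rewrite mxE normr_ge0.
  have sig0 : 0 < \sum_i q 0 i.
    by apply: lt_le_trans (sum_ge_term j q0); rewrite mxE normr_gt0.
  set sig := \sum_i q 0 i in sig0.
  have l1 : 0 < lam + 1 by lra.
  set t := sig / (lam + 1).
  have t0 : 0 < t by rewrite divr_gt0.
  have ht : t * (lam + 1) = sig by rewrite /t divfK // gt_eqF.
  pose a := (const_mx t : 'rV[R]_s).
  have [zq zz] := join_quad e a q.
  have ra := rayB (row_mx a q).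
  have sa : \sum_i a 0 i = s%:R * t.
    rewrite (eq_bigr (fun _ => t)) ?sumr_const ?card_ord ?mulr_natl // => i _.
    by rewrite mxE.
  have aa : (a *m a^T) 0 0 = s%:R * t^2.
    rewrite mxE (eq_bigr (fun _ => t * t)) ?sumr_const ?card_ord ?mulr_natl ?expr2 //.
    by move=> i _; rewrite !mxE.
  rewrite zq zz sa aa -/sig in ra.
  have hq' : lam * (q *m q^T) 0 0 <= (q *m adjmx R e *m q^T) 0 0 by rewrite qq lamE'.
  have qq0 : 0 <= (q *m q^T) 0 0 by rewrite qq ltW.
  rewrite ltNge; apply/negP => hle.
  have st0 : 0 < s%:R * t ^ 2 by rewrite mulr_gt0 // exprn_gt0.
  have : lamJ * (s%:R * t^2 + (q *m q^T) 0 0) <= lam * (s%:R * t^2 + (q *m q^T) 0 0).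
    by apply: ler_wpM2r => //; apply: addr_ge0 => //; apply: ltW.
  move=> h3; exact (@contra_aux R _ _ _ _ _ _ _ lam0 t0 st0 ht ra hq' h3).
have lJ0 : 0 < lamJ by apply: le_lt_trans lam0 hlt.
have beta1 : beta lamJ = 1.
  have /eigenvalueP [v vB vn0] := eigJ.
  have vE : v = row_mx (lsubmx v) (rsubmx v) by rewrite hsubmxK.
  move: vB vn0; rewrite vE; set a := lsubmx v; set w := rsubmx v => vB vn0.
  have [h1 h2] := join_eig vB.
  set cw := \sum_j w 0 j in h1.
  have ai i : a 0 i = cw / lamJ by rewrite -(h1 i) [lamJ * _]mulrC mulfK // gt_eqF.
  have sa : \sum_i a 0 i = s%:R * (cw / lamJ).
    by rewrite (eq_bigr _ (fun i _ => ai i)) sumr_const card_ord mulr_natl.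
  have [U Ires] := ci lamJ (dneq lamJ hlt).
  have wE : w = (\sum_i a 0 i) *: (const_mx 1 *m invmx (lamJ%:M - adjmx R e)).
    by rewrite scalemxAl -h2 mulmxK.
  have cwE : cw = (\sum_i a 0 i) * coronal R e lamJ.
    by rewrite /cw sum_ones {1}wE -scalemxAl mxE coronalE.
  have cw0 : cw != 0.
    apply/negP => /eqP cw0; move/negP: vn0; case; apply/eqP.
    have a0 : a = 0 by apply/rowP => i; rewrite ai cw0 mul0r mxE.
    have w0 : w = 0 by rewrite wE sa cw0 mul0r mulr0 scale0r.
    by rewrite a0 w0 row_mx0.
  rewrite sa in cwE.
  have : cw * 1 = cw * (s%:R / lamJ * coronal R e lamJ) by rewrite mulr1 {1}cwE; ring.
  by move/(mulfI cw0) => h; rewrite /beta -h.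
have uniq x : lam < x -> beta x = 1 -> x = lamJ.
  move=> lx bx; case: (ltgtP x lamJ) => // h.
    by have := decr x lamJ lx h; rewrite bx beta1 ltxx.
  by have := decr lamJ x hlt h; rewrite bx beta1 ltxx.
have bnd : lamJ * (lamJ - lam) <= s%:R * n%:R.
  have P0 : 0 < lamJ * (lamJ - lam) by apply: mulr_gt0 => //; rewrite subr_gt0.
  have : 1 <= s%:R * n%:R / (lamJ * (lamJ - lam)).
    rewrite -[X in X <= _]beta1 betaE // -csn mulr_sumr mulr_suml; apply: ler_sum => k _.
    apply: ler_wpM2l; first by apply: mulr_ge0 (ltW s0) (c0 _ k).
    rewrite lef_pV2 ?posrE //; last by apply: mulr_gt0 => //; rewrite subr_gt0 dlt.
    by rewrite ler_wpM2l ?(ltW lJ0) // lerD2l lerN2 dle.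
  by rewrite ler_pdivlMr // mul1r.
split => //; split => //; split.
  rewrite -mulrA; apply: (@bound_aux R) => //; first by rewrite mulr_ge0.
  by rewrite [n%:R * _]mulrC.
move=> [k hk].
have cols := reg_colsum R se hk.
have lamk : lam <= k%:R.
  have /eigenvalueP [p pA pn0] := dE k0.
  by rewrite lamE'; exact: reg_le A0 cols pA pn0.
have keig : eigenvalue (adjmx R e) k%:R.
  apply/eigenvalueP; exists (const_mx 1).
    apply/rowP => j; rewrite mxE [RHS]mxE mxE mulr1 -(cols j).
    by apply: eq_bigr => i _; rewrite mxE mul1r.
  by apply/negP => /eqP/rowP/(_ i0); rewrite !mxE => /eqP; rewrite oner_eq0.
have klam : k%:R <= lam.
  have [k' hk'] := eig_in (fun x hx => (ci x hx).1) keig.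
  by rewrite lamE' -(ger0_norm (ler0n _ k)) hk'; exact: lamM.
have lk : lam = k%:R by apply/eqP; rewrite eq_le lamk klam.
have Acol : adjmx R e *m (const_mx 1 : 'cV_n) = k%:R *: const_mx 1.
  apply/colP => i; rewrite !mxE mulr1 -(cols i).
  by apply: eq_bigr => j _; rewrite !mxE mulr1 se.
have [U _] := ci lamJ (dneq lamJ hlt).
have cne : lamJ - k%:R != 0 by rewrite subr_eq0 gt_eqF // -lk.
have M1 : (lamJ%:M - adjmx R e) *m (const_mx 1 : 'cV_n) = (lamJ - k%:R) *: const_mx 1.
  by rewrite mulmxBl mul_scalar_mx Acol scalerBl.
have I1 : invmx (lamJ%:M - adjmx R e) *m (const_mx 1 : 'cV_n) = (lamJ - k%:R)^-1 *: const_mx 1.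
  have h := congr1 (mulmx (invmx (lamJ%:M - adjmx R e))) M1.
  rewrite mulmxA mulVmx // mul1mx -scalemxAr in h.
  by rewrite [in RHS]h scalerA mulVf // scale1r.
have chiJ : coronal R e lamJ = (lamJ - k%:R)^-1 * n%:R.
  have on : ((const_mx 1 : 'rV[R]_n) *m (const_mx 1 : 'cV_n)) 0 0 = n%:R.
    by rewrite -ones_quad trmx_const.
  by rewrite coronalE -mulmxA trmx_const I1 -scalemxAr mxE on.
have eqN : lamJ * (lamJ - lam) = s%:R * n%:R.
  move: beta1; rewrite /beta chiJ -lk => h.
  have l2 : lamJ - lam != 0 by rewrite -lk in cne.
  have := congr1 (fun z => lamJ * (lamJ - lam) * z) h; rewrite mulr1 => <-; field.
  by rewrite l2 gt_eqF.
rewrite -mulrA; apply: (@eq_aux R) => //.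
by rewrite eqN mulrC.
Qed.
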